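(* Let $a,b\in\overline{{}^\bullet\mathbb{R}}$ and let $J$ be a non-infinitesimal interval of ${}^\bullet\mathbb{R}$ with endpoints $a,b$. Let $f:J\to{}^\bullet\mathbb{R}$ be a smooth function. Then there exist $\delta\in\mathbb{R}_{>0}$ and a smooth function $\bar f:(a-\delta,b+\delta)\to{}^\bullet\mathbb{R}$ such that $\bar f|_J=f$.
   Context: Fermat reals: let $\mathbb{R}_o[t]$ be the set of maps $x:\mathbb{R}_{\ge0}\to\mathbb{R}$, $t\mapsto x_t$, of the form $x_t=r+\sum_{i=1}^k\alpha_i t^{a_i}+o(t)$ as $t\to0^+$, with $k\in\mathbb{N}$, $r,\alpha_i\in\mathbb{R}$, $a_i\in\mathbb{R}_{\ge0}$. Write $x\sim y$ iff $x_t=y_t+o(t)$ as $t\to0^+$. The ring of Fermat reals is ${}^\bullet\mathbb{R}:=\mathbb{R}_o[t]/\sim$ with pointwise operations; $\mathbb{R}\subseteq{}^\bullet\mathbb{R}$ via constants. The standard part of $x=[x_t]$ is ${}^\circ x:=x_0$. ${}^\bullet\mathbb{R}$ is totally ordered by: $x\le y$ iff for representatives there is $z\in\mathbb{R}_o[t]$ with $z\sim0$ and $x_t\le y_t+z_t$ for all small $t\ge0$. $\overline{{}^\bullet\mathbb{R}}:={}^\bullet\mathbb{R}\cup\{\pm\infty\}$ with the usual operations ($\pm\infty\mp\delta=\pm\infty$) and ${}^\circ(\pm\infty):=\pm\infty$. An interval is a set $[a,b],(a,b),[a,b),(a,b]$ of points of ${}^\bullet\mathbb{R}$ with $a\le b$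 in $\overline{{}^\bullet\mathbb{R}}$; non-infinitesimal if ${}^\circ a<{}^\circ b$. The Fermat topology on ${}^\bullet\mathbb{R}^n$ has open sets ${}^\bullet V:=\{x:{}^\circ x\in V\}$, $V\subseteq\mathbb{R}^n$ open. For $\alpha\in C^\infty(W,\mathbb{R}^m)$, $W\subseteq\mathbb{R}^d$ open, ${}^\bullet\alpha([x_t]):=[\alpha(x_t)]$ on ${}^\bullet W$. A map $f:S\to{}^\bullet\mathbb{R}^m$, $S\subseteq{}^\bullet\mathbb{R}^n$, is smooth (quasi-standard smooth) if for every $x\in S$ there exist open $V\subseteq\mathbb{R}^n$ with $x\in{}^\bullet V$, open $P\subseteq\mathbb{R}^{\mathsf p}$, $p\in{}^\bullet P$ and $\alpha\in C^\infty(P\times V,\mathbb{R}^m)$ with $f(y)={}^\bullet\alpha(p,y)$ for all $y\in{}^\bullet V\cap S$. *)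

(* Defs.v *)
From Stdlib Require Import Reals ClassicalEpsilon FunctionalExtensionality.
From mathcomp Require Import ssreflect ssrfun ssrbool eqtype ssrnat fintype.

Set Implicit Arguments.
Unset Strict Implicit.

Local Open Scope R_scope.

(* t^a for t >= 0, a >= 0, with 0^0 = 1 and 0^a = 0 for a > 0 *)
Definition rpow (t a : R) : R :=
  match Rlt_dec 0 t with
  | left _ => Rpower t a
  | right _ => if Req_EM_T a 0 then 1 else 0
  end.

Definition little_o (w : R -> R) : Prop :=
  forall eps, 0 < eps -> exists d, 0 < d /\
    forall t, 0 <= t -> t < d -> Rabs (w t) <= eps * t.

Fixpoint psum (k : nat) (al a : nat -> R) (t : R) : R :=
  match k with
  | O => 0
  | S k' => psum k' al a t + al k' * rpow t (a k')
  end.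

Definition Ro (x : R -> R) : Prop :=
  exists (k : nat) (r : R) (al a : nat -> R),
    (forall i, (i < k)%N -> 0 <= a i) /\
    little_o (fun t => x t - (r + psum k al a t)).

Definition req (x y : R -> R) : Prop := little_o (fun t => x t - y t).

Definition FR : Type :=
  { C : (R -> R) -> Prop | exists x, Ro x /\ C = (fun y => Ro y /\ req y x) }.

Definition mkFR (x : R -> R) (H : Ro x) : FR :=
  exist _ (fun y => Ro y /\ req y x) (ex_intro _ x (conj H (erefl _))).

Definition rep (X : FR) (x : R -> R) : Prop := Ro x /\ proj1_sig X x.

Definition repr (X : FR) : R -> R :=
  proj1_sig (constructive_indefinite_description _ (proj2_sig X)).

Lemma repr_Ro (X : FR) : Ro (repr X).
Proof.
rewrite /repr; case: constructive_indefinite_description => x [Hx _] //.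
Qed.

Definition std (X : FR) : R := repr X 0.

Lemma Ro_shift (x : R -> R) (d : R) : Ro x -> Ro (fun t => x t - d).
Proof.
move=> [k [r [al [a [Ha Ho]]]]].
exists k, (r - d), al, a; split => //.
have -> : (fun t => x t - d - (r - d + psum k al a t)) =
          (fun t => x t - (r + psum k al a t)).
  by apply: FunctionalExtensionality.functional_extensionality => t; ring.
exact: Ho.
Qed.

Definition FRsub_real (X : FR) (d : R) : FR :=
  mkFR (Ro_shift d (repr_Ro X)).

Definition FRle (X Y : FR) : Prop :=
  exists x y z, rep X x /\ rep Y y /\ Ro z /\ req z (fun _ => 0) /\
    exists d, 0 < d /\ forall t, 0 <= t -> t < d -> x t <= y t + z t.

Definition FRlt (X Y : FR) : Prop := FRle X Y /\ X <> Y.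

Inductive FRbar : Type := Fin of FR | PInf | MInf.

Definition FRbar_le (a b : FRbar) : Prop :=
  match a, b with
  | MInf, _ => True
  | _, PInf => True
  | Fin x, Fin y => FRle x y
  | _, _ => False
  end.

Definition FRbar_lt (a b : FRbar) : Prop := FRbar_le a b /\ a <> b.

Definition FRbar_sub_real (a : FRbar) (d : R) : FRbar :=
  match a with Fin x => Fin (FRsub_real x d) | _ => a end.
Definition FRbar_add_real (a : FRbar) (d : R) : FRbar :=
  FRbar_sub_real a (- d).

Definition std_lt (a b : FRbar) : Prop :=
  match a, b with
  | Fin x, Fin y => std x < std y
  | MInf, Fin _ | MInf, PInf | Fin _, PInf => True
  | _, _ => False
  end.

Inductive ikind : Type := CC | OO | CO | OC.

Definition interval (k : ikind) (a b : FRbar) (x : FR) : Prop :=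
  match k with
  | CC => FRbar_le a (Fin x) /\ FRbar_le (Fin x) b
  | OO => FRbar_lt a (Fin x) /\ FRbar_lt (Fin x) b
  | CO => FRbar_le a (Fin x) /\ FRbar_lt (Fin x) b
  | OC => FRbar_lt a (Fin x) /\ FRbar_le (Fin x) b
  end.

Definition noninf_interval (J : FR -> Prop) (a b : FRbar) : Prop :=
  FRbar_le a b /\ std_lt a b /\ exists k, J = interval k a b.

Definition vec (N : nat) := 'I_N -> R.

Definition open_R (V : R -> Prop) : Prop :=
  forall r, V r -> exists e, 0 < e /\ forall s, Rabs (s - r) < e -> V s.

Definition open_vec (N : nat) (U : vec N -> Prop) : Prop :=
  forall z, U z -> exists e, 0 < e /\
    forall w : vec N, (forall i, Rabs (w i - z i) < e) -> U w.

Definition upd (N : nat) (z : vec N) (i : 'I_N) (s : R) : vec N :=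
  fun j => if j == i then s else z j.

Definition has_partial (N : nat) (g : vec N -> R) (i : 'I_N) (z : vec N) (l : R) :=
  derivable_pt_lim (fun s => g (upd z i s)) (z i) l.

Definition continuous_on_vec (N : nat) (U : vec N -> Prop) (F : vec N -> R) :=
  forall z, U z -> forall eps, 0 < eps -> exists d, 0 < d /\
    forall w, U w -> (forall i, Rabs (w i - z i) < d) -> Rabs (F w - F z) < eps.

(* g is C^oo on the open set U: all iterated partial derivatives
   D (i1 :: ... :: ik :: nil) = d_i1 ... d_ik g exist and are continuous on U *)
Definition smooth_vec (N : nat) (U : vec N -> Prop) (g : vec N -> R) : Prop :=
  exists D : list 'I_N -> vec N -> R,
    (forall z, U z -> D nil z = g z) /\
    (forall l i z, U z -> has_partial (D l) i z (D (cons i l) z)) /\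
    (forall l, continuous_on_vec U (D l)).

Definition smooth_prod (p : nat) (P : vec p -> Prop) (V : R -> Prop)
  (al : vec p -> R -> R) : Prop :=
  smooth_vec (fun z : vec p.+1 => P (fun i => z (widen_ord (leqnSn p) i)) /\ V (z ord_max))
             (fun z : vec p.+1 => al (fun i => z (widen_ord (leqnSn p) i)) (z ord_max)).

Definition ext_eq (p : nat) (al : vec p -> R -> R) (q : 'I_p -> FR) (y : FR) (Z : FR) :=
  forall (qs : 'I_p -> R -> R) (ys : R -> R),
    (forall i, rep (q i) (qs i)) -> rep y ys ->
    rep Z (fun t => al (fun i => qs i t) (ys t)).

(* f : S -> FR is (quasi-standard) smooth, for S a subset of FR (n = m = 1);
   f is given as a total function whose values outside S are irrelevant *)
Definition smooth_on (S : FR -> Prop) (f : FR -> FR) : Prop :=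
  forall x, S x ->
    exists (V : R -> Prop) (p : nat) (P : vec p -> Prop) (q : 'I_p -> FR)
           (al : vec p -> R -> R),
      open_R V /\ V (std x) /\ open_vec P /\ P (fun i => std (q i)) /\
      smooth_prod P V al /\
      forall y, V (std y) -> S y -> ext_eq al q y (f y).

(* Main.v *)
Require Import Defs.
From Stdlib Require Import Reals Lra Lia ClassicalEpsilon FunctionalExtensionality.
From mathcomp Require Import ssreflect ssrfun ssrbool eqtype ssrnat fintype.
Local Open Scope R_scope.
Set Implicit Arguments.
Unset Strict Implicit.

Lemma rpow_pos_t t a : 0 < t -> rpow t a = Rpower t a.
Proof. by move=> h; rewrite /rpow; destruct (Rlt_dec 0 t). Qed.

Lemma rpow_0a a : 0 < a -> rpow 0 a = 0.
Proof.
move=> ha; rewrite /rpow; destruct (Rlt_dec 0 0); first lra.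
destruct (Req_EM_T a 0); simpl; lra.
Qed.

Lemma rpow_t0 t : rpow t 0 = 1.
Proof.
rewrite /rpow; destruct (Rlt_dec 0 t); first by rewrite Rpower_O.
by destruct (Req_EM_T 0 0); simpl.
Qed.

Lemma rpow_ge0 t a : 0 <= rpow t a.
Proof.
rewrite /rpow; destruct (Rlt_dec 0 t).
  rewrite /Rpower; left; exact: exp_pos.
destruct (Req_EM_T a 0); simpl; lra.
Qed.

Lemma rpow_nonpos_t t a : ~ 0 < t -> rpow t a = rpow 0 a.
Proof.
move=> h; rewrite /rpow; destruct (Rlt_dec 0 t); first lra.
destruct (Rlt_dec 0 0); first lra. done.
Qed.

Lemma rpow_add t a b : 0 <= a -> 0 <= b -> rpow t (a + b) = rpow t a * rpow t b.
Proof.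
move=> ha hb; rewrite /rpow; destruct (Rlt_dec 0 t).
  by rewrite Rpower_plus.
destruct (Req_EM_T (a+b) 0); destruct (Req_EM_T a 0); destruct (Req_EM_T b 0); simpl; lra.
Qed.

Lemma rpow_anti t a b : 0 <= t <= 1 -> 0 < b -> b <= a -> rpow t a <= rpow t b.
Proof.
move=> [t0 t1] hb hba.
case: (Req_dec t 0) => [->|tn0].
  rewrite !rpow_0a; lra.
have tp : 0 < t by lra.
rewrite !rpow_pos_t // /Rpower.
have : ln t <= 0.
  case: (Req_dec t 1) => [->|t1']; first by rewrite ln_1; lra.
  rewrite -ln_1; left; apply: ln_increasing; lra.
move=> hl.
have h2 : a * ln t <= b * ln t by nra.
case: (Rle_lt_or_eq_dec _ _ h2) => h3; last by rewrite h3; lra.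
left; exact: exp_increasing.
Qed.

Lemma rpow_t1 t : 0 <= t -> rpow t 1 = t.
Proof.
move=> h; case: (Req_dec t 0) => [->|n0]; first by rewrite rpow_0a; lra.
rewrite rpow_pos_t; last lra. rewrite Rpower_1 //; lra.
Qed.

Lemma rpow_le1 t m : 0 <= t <= 1 -> 0 <= m -> rpow t m <= 1.
Proof.
move=> [t0 t1] hm.
case: (Req_dec t 0) => [->|n0].
  case: (Req_dec m 0) => [->|mn0]; first by rewrite rpow_t0; lra.
  rewrite rpow_0a; lra.
rewrite rpow_pos_t; last lra. rewrite /Rpower -exp_0.
have : ln t <= 0.
  case: (Req_dec t 1) => [->|t1']; first by rewrite ln_1; lra.
  rewrite -ln_1; left; apply: ln_increasing; lra.
move=> hl.
have h2 : m * ln t <= 0 by nra.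
case: (Rle_lt_or_eq_dec _ _ h2) => h3; last by rewrite h3; lra.
left; exact: exp_increasing.
Qed.

Lemma rpow_powK t m (K : nat) : 0 <= t <= 1 -> 0 < m -> 1 <= m * INR K -> (rpow t m) ^ K <= t.
Proof.
move=> [t0 t1] hm hK.
have K0 : K <> 0%nat by move=> e; rewrite e /= in hK; lra.
case: (Req_dec t 0) => [->|n0].
  rewrite rpow_0a //. destruct K => //. rewrite /= ; lra.
have tp : 0 < t by lra.
rewrite rpow_pos_t // -Rpower_pow; last by rewrite /Rpower; exact: exp_pos.
rewrite Rpower_mult -rpow_pos_t //.
rewrite -{2}(rpow_t1 t0). apply: rpow_anti => //; lra.
Qed.

Lemma pow_anti x n m : 0 <= x <= 1 -> (n <= m)%N -> x ^ m <= x ^ n.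
Proof.
move=> hx /leP hnm.
have [k ->] : exists k, m = (n + k)%coq_nat by exists (Nat.sub m n); lia.
rewrite pow_add.
have h1 : 0 <= x ^ n by apply: pow_le; lra.
have h2 : x ^ k <= 1 by rewrite -(pow1 k); apply: pow_incr; lra.
have h3 : 0 <= x ^ k by apply: pow_le; lra.
nra.
Qed.

Definition ev (P : R -> Prop) := exists d, 0 < d /\ forall t, 0 <= t -> t < d -> P t.

Lemma ev_and P Q : ev P -> ev Q -> ev (fun t => P t /\ Q t).
Proof.
move=> [d1 [h1 H1]] [d2 [h2 H2]]; exists (Rmin d1 d2); split.
  by apply: Rmin_pos.
move=> t t0 td; split; [apply: H1|apply: H2] => //.
  apply: Rlt_le_trans td (Rmin_l _ _).
apply: Rlt_le_trans td (Rmin_r _ _).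
Qed.

Lemma ev_mono (P Q : R -> Prop) : (forall t, 0 <= t -> P t -> Q t) -> ev P -> ev Q.
Proof. move=> H [d [hd Hd]]; exists d; split => // t t0 td; apply: H => //; exact: Hd. Qed.

Lemma ev_true (P : R -> Prop) : (forall t, P t) -> ev P.
Proof. move=> H; exists 1; split; [lra|] => t _ _; exact: H. Qed.

Lemma lo_ev f g : ev (fun t => f t = g t) -> little_o f -> little_o g.
Proof.
move=> [d [hd Hd]] Hf eps he.
have [d1 [h1 H1]] := Hf eps he.
exists (Rmin d d1); split; first by apply: Rmin_pos.
move=> t t0 td. rewrite -Hd //; last by apply: Rlt_le_trans td (Rmin_l _ _).
apply: H1 => //; apply: Rlt_le_trans td (Rmin_r _ _).
Qed.

Lemma lo_ext f g : (forall t, f t = g t) -> little_o f -> little_o g.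
Proof. move=> H; apply: lo_ev; exact: ev_true. Qed.
Arguments lo_ext {f g}.

Lemma lo0 : little_o (fun _ => 0).
Proof.
move=> eps he; exists 1; split; first lra.
move=> t t0 _; rewrite Rabs_R0; nra.
Qed.

Lemma lo_le f g : little_o g -> ev (fun t => Rabs (f t) <= Rabs (g t)) -> little_o f.
Proof.
move=> Hg [d [hd Hd]] eps he.
have [d1 [h1 H1]] := Hg eps he.
exists (Rmin d d1); split; first by apply: Rmin_pos.
move=> t t0 td. apply: Rle_trans (Hd _ t0 _) _; first by apply: Rlt_le_trans td (Rmin_l _ _).
apply: H1 => //; apply: Rlt_le_trans td (Rmin_r _ _).
Qed.

Arguments lo_le {f g}.

Lemma lo_add f g : little_o f -> little_o g -> little_o (fun t => f t + g t).
Proof.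
move=> Hf Hg eps he.
have [d1 [h1 H1]] := Hf (eps/2) ltac:(lra).
have [d2 [h2 H2]] := Hg (eps/2) ltac:(lra).
exists (Rmin d1 d2); split; first by apply: Rmin_pos.
move=> t t0 td.
have := H1 t t0 (Rlt_le_trans _ _ _ td (Rmin_l _ _)).
have := H2 t t0 (Rlt_le_trans _ _ _ td (Rmin_r _ _)).
have := Rabs_triang (f t) (g t). lra.
Qed.

Lemma lo_scal c f : little_o f -> little_o (fun t => c * f t).
Proof.
move=> Hf eps he.
have [d1 [h1 H1]] := Hf (eps / (Rabs c + 1)) ltac:(apply: Rdiv_lt_0_compat => //; have := Rabs_pos c; lra).
exists d1; split => // t t0 td.
have := H1 t t0 td. rewrite Rabs_mult.
have hc := Rabs_pos c.
have -> : eps / (Rabs c + 1) * t = (eps * t) / (Rabs c + 1) by field; lra.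
move=> h. have h' : Rabs (f t) * (Rabs c + 1) <= eps * t.
  apply: (Rmult_le_reg_r (/ (Rabs c + 1))). apply: Rinv_0_lt_compat; lra.
  rewrite Rmult_assoc Rinv_r; last lra. rewrite Rmult_1_r. exact: h.
have := Rabs_pos (f t). nra.
Qed.

Lemma lo_sub f g : little_o f -> little_o g -> little_o (fun t => f t - g t).
Proof.
move=> Hf Hg; apply: (lo_ext (f := fun t => f t + (-1) * g t)); first by move=> t; ring.
apply: lo_add => //; exact: lo_scal.
Qed.

Lemma lo_bnd f g : little_o f -> (exists B, ev (fun t => Rabs (g t) <= B)) -> little_o (fun t => f t * g t).
Proof.
move=> Hf [B HB].
have HB' : ev (fun t => Rabs (g t) <= Rabs B + 1).
  apply: ev_mono HB => t _ h; have := Rle_abs B; lra.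
apply: (lo_le (g := fun t => (Rabs B + 1) * f t)); first exact: lo_scal.
apply: ev_mono HB' => t _ h.
rewrite !Rabs_mult (Rabs_pos_eq (Rabs B + 1)); last by have := Rabs_pos B; lra.
have := Rabs_pos (f t); have := Rabs_pos (g t). nra.
Qed.

Lemma lo_sq h : (exists C, ev (fun t => Rabs (h t) <= C * (t * t))) -> little_o h.
Proof.
move=> [C [d [hd Hd]]] eps he.
exists (Rmin d (eps / (Rabs C + 1))); split.
  apply: Rmin_pos => //; apply: Rdiv_lt_0_compat => //; have := Rabs_pos C; lra.
move=> t t0 td.
have td1 : t < d by apply: Rlt_le_trans td (Rmin_l _ _).
have td2 : t < eps / (Rabs C + 1) by apply: Rlt_le_trans td (Rmin_r _ _).
have hC := Rabs_pos C.
have td3 : t * (Rabs C + 1) <= eps.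
  have := Rmult_lt_compat_r (Rabs C + 1) _ _ ltac:(lra) td2.
  rewrite /Rdiv Rmult_assoc Rinv_l; lra.
apply: Rle_trans (Hd t t0 td1) _.
have := Rle_abs C. nra.
Qed.

Lemma req_refl x : req x x.
Proof. apply: (lo_ext (f := fun _ => 0)); [move=> t; ring | exact: lo0]. Qed.

Lemma req_sym x y : req x y -> req y x.
Proof.
move=> H; apply: (lo_ext (f := fun t => (-1) * (x t - y t))); first by move=> t; ring.
exact: lo_scal.
Qed.

Lemma req_trans x y z : req x y -> req y z -> req x z.
Proof.
move=> H1 H2; apply: (lo_ext (f := fun t => (x t - y t) + (y t - z t))); first by move=> t; ring.
exact: lo_add.
Qed.

Lemma lo_at0 f : little_o f -> f 0 = 0.
Proof.
move=> H; have [d [hd Hd]] := H 1 ltac:(lra).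
have := Hd 0 (Rle_refl 0) hd. rewrite Rmult_0_r => h.
case: (Req_dec (f 0) 0) => // hn. have := Rabs_pos_lt _ hn. lra.
Qed.

Lemma req_at0 x y : req x y -> x 0 = y 0.
Proof. move/lo_at0 => /=; lra. Qed.

Inductive PS : (R -> R) -> Prop :=
| PS0 : PS (fun _ => 0)
| PSc g c a : 0 <= a -> PS g -> PS (fun t => g t + c * rpow t a).

Lemma PS_ext g h : (forall t, g t = h t) -> PS g -> PS h.
Proof. move=> H; have -> : h = g by apply: functional_extensionality => t; rewrite H. done. Qed.
Arguments PS_ext {g h}.

Lemma PS_const c : PS (fun _ => c).
Proof.
apply: (PS_ext (g := fun t => 0 + c * rpow t 0)); first by move=> t; rewrite rpow_t0; ring.
apply: PSc; [lra|exact: PS0].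
Qed.

Lemma PS_add g h : PS g -> PS h -> PS (fun t => g t + h t).
Proof.
move=> Hg; elim=> [|h' c a ha Hh IH].
  by apply: PS_ext Hg => t; ring.
apply: (PS_ext (g := fun t => (g t + h' t) + c * rpow t a)); first by move=> t; ring.
exact: PSc.
Qed.

Lemma PS_scal k g : PS g -> PS (fun t => k * g t).
Proof.
elim=> [|g' c a ha Hg IH].
  by apply: PS_ext PS0 => t; ring.
apply: (PS_ext (g := fun t => k * g' t + (k * c) * rpow t a)); first by move=> t; ring.
exact: PSc.
Qed.

Lemma PS_mul_term g c a : 0 <= a -> PS g -> PS (fun t => g t * (c * rpow t a)).
Proof.
move=> ha; elim=> [|g' c' a' ha' Hg IH].
  by apply: PS_ext PS0 => t; ring.
apply: (PS_ext (g := fun t => g' t * (c * rpow t a) + (c' * c) * rpow t (a' + a))).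
  by move=> t; rewrite rpow_add //; ring.
apply: PSc => //; lra.
Qed.

Lemma PS_mul g h : PS g -> PS h -> PS (fun t => g t * h t).
Proof.
move=> Hg; elim=> [|h' c a ha Hh IH].
  by apply: PS_ext PS0 => t; ring.
apply: (PS_ext (g := fun t => g t * h' t + g t * (c * rpow t a))); first by move=> t; ring.
apply: PS_add => //; exact: PS_mul_term.
Qed.

Lemma PS_psum k al a : (forall i, (i < k)%N -> 0 <= a i) -> PS (psum k al a).
Proof.
elim: k => [|k IH] H /=; first exact: PS0.
apply: PSc; first by apply: H.
by apply: IH => i hi; apply: H; apply: ltnW.
Qed.

Lemma PS_to_psum g : PS g -> exists k al a, (forall i, (i < k)%N -> 0 <= a i) /\ forall t, g t = psum k al a t.
Proof.
elim=> [|g' c a0 ha Hg [k [al [a [Ha Heq]]]]].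
  by exists 0%N, (fun _ => 0), (fun _ => 0); split.
exists k.+1, (fun i => if i == k then c else al i), (fun i => if i == k then a0 else a i); split.
  move=> i; rewrite ltnS leq_eqVlt; case/orP => [/eqP ->|hi]; first by rewrite eqxx.
  by rewrite (ltn_eqF hi); apply: Ha.
move=> t /=; rewrite eqxx Heq.
have -> : forall k', (k' <= k)%N -> psum k' (fun i => if i == k then c else al i) (fun i => if i == k then a0 else a i) t = psum k' al a t.
  elim=> [|k' IH'] // hk /=. rewrite IH'; last exact: ltnW.
  by rewrite (ltn_eqF hk).
 by [].
by [].
Qed.

Lemma Ro_iff x : Ro x <-> exists g, PS g /\ little_o (fun t => x t - g t).
Proof.
split.
  move=> [k [r [al [a [Ha Ho]]]]].
  exists (fun t => r + psum k al a t); split => //.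
  apply: PS_add; [exact: PS_const | exact: PS_psum].
move=> [g [Hg Ho]]; have [k [al [a [Ha Heq]]]] := PS_to_psum Hg.
exists k, 0, al, a; split => //.
by apply: lo_ext Ho => t; rewrite Heq; ring.
Qed.

Lemma PS_hold g : PS g -> exists m C, 0 < m <= 1 /\ 0 <= C /\
  forall t, 0 <= t <= 1 -> Rabs (g t - g 0) <= C * rpow t m.
Proof.
elim=> [|g' c a ha Hg [m [C [hm [hC H]]]]].
  exists 1, 0; split; first lra; split; first lra.
  move=> t _; rewrite Rminus_0_r Rabs_R0; lra.
case: (Req_dec a 0) => [ea|na].
  exists m, C; split => //; split => // t ht.
  rewrite ea !rpow_t0.
  have -> : g' t + c * 1 - (g' 0 + c * 1) = g' t - g' 0 by ring.
  exact: H.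
have hap : 0 < a by lra.
exists (Rmin m a), (C + Rabs c); split.
  split; [apply: Rmin_pos; lra | apply: Rle_trans (Rmin_l _ _) _; lra].
split; first by have := Rabs_pos c; lra.
move=> t ht.
rewrite (rpow_0a hap).
have -> : g' t + c * rpow t a - (g' 0 + c * 0) = (g' t - g' 0) + c * rpow t a by ring.
apply: Rle_trans (Rabs_triang _ _) _.
rewrite Rabs_mult (Rabs_pos_eq (rpow t a)); last exact: rpow_ge0.
have h1 : rpow t m <= rpow t (Rmin m a).
  apply: rpow_anti => //; [apply: Rmin_pos; lra | exact: Rmin_l].
have h2 : rpow t a <= rpow t (Rmin m a).
  apply: rpow_anti => //; [apply: Rmin_pos; lra | exact: Rmin_r].
have := H t ht. have := Rabs_pos c. have := rpow_ge0 t m. have := rpow_ge0 t a.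
nra.
Qed.

Lemma Ro_hold x : Ro x -> exists m C, 0 < m <= 1 /\ 0 <= C /\
  ev (fun t => Rabs (x t - x 0) <= C * rpow t m).
Proof.
move/Ro_iff=> [g [Hg Ho]].
have [m [C [hm [hC H]]]] := PS_hold Hg.
have x0 : x 0 = g 0 by have := lo_at0 Ho; lra.
have [d [hd Hd]] := Ho 1 ltac:(lra).
exists m, (C + 1); split => //; split; first lra.
exists (Rmin d 1); split; first by apply: Rmin_pos; lra.
move=> t t0 td.
have td1 : t < d by apply: Rlt_le_trans td (Rmin_l _ _).
have td2 : t <= 1 by have := Rmin_r d 1; lra.
have := Hd t t0 td1. have := H t (conj t0 td2). rewrite x0.
have e : x t - g 0 = (g t - g 0) + (x t - g t) by ring.
rewrite e => h1 h2.
apply: Rle_trans (Rabs_triang _ _) _.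
have h3 : t <= rpow t m.
  rewrite -{1}(rpow_t1 t0). apply: rpow_anti => //; lra.
lra.
Qed.

Lemma exK m : 0 < m -> exists K : nat, (1 <= K)%N /\ 1 <= m * INR K.
Proof.
move=> hm.
have [n hn] := INR_archimed m 1 hm.
exists n.+1; split => //.
rewrite S_INR. have := pos_INR n. nra.
Qed.

Lemma Ro_holdK x : Ro x -> exists (K : nat) C, (1 <= K)%N /\ 0 <= C /\
  ev (fun t => Rabs (x t - x 0) ^ K <= C * t).
Proof.
move=> /Ro_hold [m [C [hm [hC H]]]].
have [K [hK1 hK]] := exK (proj1 hm).
exists K, (C ^ K); split => //; split; first by apply: pow_le.
have ev1 : ev (fun t => t <= 1) by exists 1; split; [lra| move=> t _ h; lra].
apply: (ev_mono _ (ev_and H ev1)) => t t0 [h h1].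
apply: Rle_trans (pow_incr _ _ K (conj (Rabs_pos _) h)) _.
rewrite Rpow_mult_distr. apply: Rmult_le_compat_l; first by apply: pow_le.
apply: rpow_powK => //; lra.
Qed.

Lemma ev_lt1 : ev (fun t => t <= 1).
Proof. by exists 1; split; [lra| move=> t _ h; lra]. Qed.

Lemma Ro_cont x : Ro x -> forall eps, 0 < eps -> ev (fun t => Rabs (x t - x 0) < eps).
Proof.
move=> /Ro_holdK [K [C [hK [hC [d [hd H]]]]]] eps he.
have hpe : 0 < eps ^ K by apply: pow_lt.
exists (Rmin d (eps ^ K / (C + 1))); split.
  apply: Rmin_pos => //; apply: Rdiv_lt_0_compat; lra.
move=> t t0 td.
have td1 : t < d by apply: Rlt_le_trans td (Rmin_l _ _).
have td2 : t < eps ^ K / (C + 1) by apply: Rlt_le_trans td (Rmin_r _ _).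
have h := H t t0 td1.
have h2 : C * t < eps ^ K.
  have : t * (C + 1) < eps ^ K.
    have := Rmult_lt_compat_r (C + 1) _ _ ltac:(lra) td2.
    rewrite /Rdiv Rmult_assoc Rinv_l; lra.
  nra.
case: (Rlt_le_dec (Rabs (x t - x 0)) eps) => // hge.
have := pow_incr _ _ K (conj (Rlt_le _ _ he) hge). lra.
Qed.

Lemma Ro_bnd x : Ro x -> exists B, ev (fun t => Rabs (x t) <= B).
Proof.
move=> Hx; exists (Rabs (x 0) + 1).
have H1 : ev (fun t => Rabs (x t - x 0) < 1) by apply: Ro_cont => //; lra.
apply: (ev_mono _ H1) => t _ h.
have -> : x t = x 0 + (x t - x 0) by ring.
apply: Rle_trans (Rabs_triang _ _) _; lra.
Qed.

Lemma PS_Ro g : PS g -> Ro g.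
Proof.
move=> Hg; apply/Ro_iff; exists g; split => //.
by apply: lo_ext lo0 => t; ring.
Qed.

Lemma Ro_lo x y : Ro x -> little_o (fun t => y t - x t) -> Ro y.
Proof.
move/Ro_iff=> [g [Hg Ho]] H; apply/Ro_iff; exists g; split => //.
by apply: lo_ext (lo_add H Ho) => t; ring.
Qed.

Lemma Ro_ext x y : Ro x -> ev (fun t => x t = y t) -> Ro y.
Proof.
move=> Hx He; apply: Ro_lo Hx _.
by apply: lo_ev lo0; apply: (ev_mono _ He) => t _ ->; ring.
Qed.

Lemma Ro_const c : Ro (fun _ => c).
Proof. exact: PS_Ro (PS_const c). Qed.

Lemma Ro_add x y : Ro x -> Ro y -> Ro (fun t => x t + y t).
Proof.
move/Ro_iff=> [g [Hg Hgo]] /Ro_iff [h [Hh Hho]]; apply/Ro_iff.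
exists (fun t => g t + h t); split; first exact: PS_add.
by apply: lo_ext (lo_add Hgo Hho) => t; ring.
Qed.

Lemma Ro_mul x y : Ro x -> Ro y -> Ro (fun t => x t * y t).
Proof.
move=> Hx Hy.
have [By HBy] := Ro_bnd Hy.
move: Hx Hy => /Ro_iff [g [Hg Hgo]] /Ro_iff [h [Hh Hho]]; apply/Ro_iff.
have [Bg HBg] := Ro_bnd (PS_Ro Hg).
exists (fun t => g t * h t); split; first exact: PS_mul.
have H1 := lo_bnd Hgo (ex_intro _ By HBy).
have H2 := lo_bnd Hho (ex_intro _ Bg HBg).
apply: lo_ext (lo_add H1 H2) => t /=; ring.
Qed.

Lemma Ro_scal k x : Ro x -> Ro (fun t => k * x t).
Proof. move=> Hx; apply: Ro_mul => //; exact: Ro_const. Qed.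

Lemma Ro_pow x n : Ro x -> Ro (fun t => x t ^ n).
Proof.
move=> Hx; elim: n => [|n IH] /=; first exact: Ro_const.
exact: Ro_mul.
Qed.

Fixpoint tay (c : nat -> R) (K : nat) (y : R) : R :=
  match K with
  | O => 0
  | S K' => tay c K' y + c K' * (y ^ K' / INR (Factorial.fact K'))
  end.

Lemma dpl_ext f g x l l' : (forall y, f y = g y) -> l = l' -> derivable_pt_lim f x l -> derivable_pt_lim g x l'.
Proof.
move=> H <-; have -> : g = f by apply: functional_extensionality => y; rewrite H.
done.
Qed.

Lemma tay_deriv c K y : derivable_pt_lim (tay c (S K)) y (tay (fun k => c (S k)) K y).
Proof.
elim: K y => [|K IH] y.
  apply: (dpl_ext (f := fun _ => 0 + c 0%nat * (1 / 1))) => //.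
  exact: derivable_pt_lim_const.
have hd := derivable_pt_lim_plus _ _ y _ _ (IH y)
  (derivable_pt_lim_scal (fun z => z ^ (S K)) (c (S K) / INR (Factorial.fact (S K))) y _ (derivable_pt_lim_pow y (S K))).
apply: (dpl_ext _ _ hd).
  move=> z. rewrite /plus_fct /mult_real_fct.
  change (tay c (S (S K)) z) with (tay c (S K) z + c (S K) * (z ^ (S K) / INR (Factorial.fact (S K)))).
  field. apply: INR_fact_neq_0.
have hf := INR_fact_neq_0 K.
have -> : INR (Factorial.fact (S K)) = INR (S K) * INR (Factorial.fact K) by rewrite -mult_INR.
change (tay (fun k : nat => c k.+1) K.+1 y) with (tay (fun k : nat => c k.+1) K y + c (S K) * (y ^ K / INR (Factorial.fact K))).
rewrite /=. have hK : INR K.+1 <> 0 by apply: not_0_INR.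
field. by split.
Qed.

Lemma tay_at0 c K : tay c (S K) 0 = c 0%nat.
Proof.
elim: K => [|K IH] /=; first by field.
rewrite /= in IH. rewrite IH. rewrite Rmult_0_l /Rdiv Rmult_0_l; ring.
Qed.

Lemma dpl_shift (F : R -> R) x0 s l :
  derivable_pt_lim F (s - x0) l -> derivable_pt_lim (fun z => F (z - x0)) s l.
Proof.
move=> H.
have h1 : derivable_pt_lim (fun z => z - x0) s 1.
  have := derivable_pt_lim_minus _ _ s _ _ (derivable_pt_lim_id s) (derivable_pt_lim_const x0 s).
  rewrite Rminus_0_r. exact.
have := derivable_pt_lim_comp _ _ _ _ _ h1 H.
apply: dpl_ext => //; ring.
Qed.

Lemma taylor K : forall (G : nat -> R -> R) x0 rho M,
  (forall k s, Rabs (s - x0) < rho -> derivable_pt_lim (G k) s (G (S k) s)) ->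
  (forall s, Rabs (s - x0) < rho -> Rabs (G K s) <= M) ->
  forall x, Rabs (x - x0) < rho ->
    Rabs (G 0%nat x - tay (fun k => G k x0) K (x - x0)) <= M * Rabs (x - x0) ^ K.
Proof.
elim: K => [|K IH] G x0 rho M Hd HM x hx.
  rewrite /= Rminus_0_r Rmult_1_r; exact: HM.
have hx0 : Rabs (x0 - x0) < rho by apply: Rle_lt_trans hx; rewrite Rminus_diag Rabs_R0; exact: Rabs_pos.
have hM0 : 0 <= M by apply: Rle_trans (HM x0 hx0); exact: Rabs_pos.
have IH' := IH (fun k => G (S k)) x0 rho M (fun k s h => Hd (S k) s h) HM.
set Rm := fun s => G 0%nat s - tay (fun k => G k x0) (S K) (s - x0).
set Rd := fun s => G 1%nat s - tay (fun k => G (S k) x0) K (s - x0).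
have HRd : forall s, Rabs (s - x0) < rho -> derivable_pt_lim Rm s (Rd s).
  move=> s hs. apply: derivable_pt_lim_minus; first exact: Hd.
  apply: (dpl_shift (F := tay (fun k => G k x0) (S K))). exact: tay_deriv.
have HR0 : Rm x0 = 0 by rewrite /Rm Rminus_diag tay_at0; ring.
rewrite -/(Rm x).
have key : forall a b, a < b -> Rabs (a - x0) < rho -> Rabs (b - x0) < rho ->
   exists c, Rm b - Rm a = Rd c * (b - a) /\ a < c < b.
  move=> a b hab ha hb; apply: MVT_cor2 => // c hc; apply: HRd.
  apply: Rle_lt_trans _ (Rmax_lub_lt _ _ _ ha hb).
  rewrite /Rabs; repeat case: Rcase_abs => ?; rewrite /Rmax; repeat case: Rle_dec => ?; lra.
case: (Rtotal_order x x0) => [hlt|[heq|hgt]].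
- have [c [hc1 hc2]] := key x x0 hlt hx hx0.
  have hc : Rabs (c - x0) < rho by apply: Rle_lt_trans hx; rewrite !Rabs_left; lra.
  have := IH' c hc. rewrite -/(Rd c) => hb.
  have hcx : Rabs (c - x0) ^ K <= Rabs (x - x0) ^ K.
    apply: pow_incr; split; first exact: Rabs_pos. rewrite !Rabs_left; lra.
  have e : Rm x = - (Rd c * (x0 - x)) by rewrite -hc1 HR0; ring.
  have hb' : Rabs (Rd c) <= M * Rabs (x - x0) ^ K by apply: Rle_trans hb _; apply: Rmult_le_compat_l.
  rewrite e Rabs_Ropp Rabs_mult Rabs_minus_sym /=.
  have := Rmult_le_compat_r (Rabs (x - x0)) _ _ (Rabs_pos _) hb'. lra.
- subst x. rewrite HR0 Rabs_R0 Rminus_diag Rabs_R0 /=. lra.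
- have [c [hc1 hc2]] := key x0 x hgt hx0 hx.
  have hc : Rabs (c - x0) < rho by apply: Rle_lt_trans hx; rewrite !Rabs_right; lra.
  have := IH' c hc. rewrite -/(Rd c) => hb.
  have hcx : Rabs (c - x0) ^ K <= Rabs (x - x0) ^ K.
    apply: pow_incr; split; first exact: Rabs_pos. rewrite !Rabs_right; lra.
  have e : Rm x = Rd c * (x - x0) by rewrite -hc1 HR0; ring.
  have hb' : Rabs (Rd c) <= M * Rabs (x - x0) ^ K by apply: Rle_trans hb _; apply: Rmult_le_compat_l.
  rewrite e Rabs_mult /=.
  have := Rmult_le_compat_r (Rabs (x - x0)) _ _ (Rabs_pos _) hb'. lra.
Qed.

Lemma req_mul a a' b b' : req a a' -> req b b' -> Ro a' -> Ro b ->
  req (fun t => a t * b t) (fun t => a' t * b' t).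
Proof.
move=> H1 H2 Ha Hb.
have := lo_add (lo_bnd H1 (Ro_bnd Hb)) (lo_bnd H2 (Ro_bnd Ha)).
apply: lo_ext => t /=; ring.
Qed.

Lemma req_add a a' b b' : req a a' -> req b b' -> req (fun t => a t + b t) (fun t => a' t + b' t).
Proof. move=> H1 H2; apply: lo_ext (lo_add H1 H2) => t /=; ring. Qed.

Lemma req_pow a a' n : req a a' -> Ro a -> Ro a' -> req (fun t => a t ^ n) (fun t => a' t ^ n).
Proof.
move=> H Ha Ha'; elim: n => [|n IH] /=; first exact: req_refl.
apply: req_mul => //; exact: Ro_pow.
Qed.

Lemma Ro_tay (c : nat -> R -> R) v K : (forall k, Ro (c k)) -> Ro v ->
  Ro (fun t => tay (fun k => c k t) K (v t)).
Proof.
move=> Hc Hv; elim: K => [|K IH] /=; first exact: Ro_const.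
apply: Ro_add => //; apply: Ro_mul => //.
apply: (Ro_ext (x := fun t => / INR (Factorial.fact K) * v t ^ K)).
  apply: Ro_scal; exact: Ro_pow.
by apply: ev_true => t; rewrite /Rdiv Rmult_comm.
Qed.

Lemma req_tay (c c' : nat -> R -> R) v v' K : (forall k, req (c k) (c' k)) ->
  (forall k, Ro (c k)) -> (forall k, Ro (c' k)) -> req v v' -> Ro v -> Ro v' ->
  req (fun t => tay (fun k => c k t) K (v t)) (fun t => tay (fun k => c' k t) K (v' t)).
Proof.
move=> Hcc Hc Hc' Hvv Hv Hv'; elim: K => [|K IH] /=; first exact: req_refl.
apply: req_add => //.
apply: req_mul => //.
have := lo_scal (/ INR (Factorial.fact K)) (req_pow K Hvv Hv Hv').
apply: lo_ext => t; rewrite /Rdiv; ring.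
apply: (Ro_ext (x := fun t => / INR (Factorial.fact K) * v t ^ K)).
  apply: Ro_scal; exact: Ro_pow.
by apply: ev_true => t; rewrite /Rdiv Rmult_comm.
Qed.

Lemma ev_fin N (P : 'I_N -> R -> Prop) : (forall i, ev (P i)) -> ev (fun t => forall i, P i t).
Proof.
move=> H.
have : forall n, ev (fun t => forall i : 'I_N, (i < n)%N -> P i t).
  elim=> [|n [d [hd Hd]]].
    by apply: ev_true => t i.
  case: (ltnP n N) => hn.
    have := ev_and (ex_intro _ d (conj hd Hd)) (H (Ordinal hn)).
    apply: ev_mono => t _ [h1 h2] i; rewrite ltnS leq_eqVlt; case/orP => [/eqP e|hi].
      by have -> : i = Ordinal hn by apply: val_inj.
    exact: h1.
  exists d; split => // t t0 td i _; apply: Hd => //; exact: leq_trans (ltn_ord i) hn.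
move=> /(_ N); apply: ev_mono => t _ h i; exact: h.
Qed.

Lemma upd_same N (z : vec N) i s : upd z i s i = s.
Proof. by rewrite /upd eqxx. Qed.

Lemma upd_upd N (z : vec N) i s s' : upd (upd z i s) i s' = upd z i s'.
Proof. apply: functional_extensionality => j; rewrite /upd; by case: (j == i). Qed.

Lemma upd_id N (z : vec N) i : upd z i (z i) = z.
Proof. apply: functional_extensionality => j; rewrite /upd; by case: eqP => [->|]. Qed.

Section Core.
Variables (N : nat) (U : vec N -> Prop) (D : list 'I_N -> vec N -> R) (z0 : vec N).
Hypotheses (HU : open_vec U) (Hz0 : U z0)
  (HD : forall l i z, U z -> has_partial (D l) i z (D (i :: l) z))
  (HC : forall l, continuous_on_vec U (D l)).
Variables (u u' : 'I_N -> R -> R).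
Hypotheses (Hu : forall i, Ro (u i)) (Hu' : forall i, Ro (u' i)) (Hu0 : forall i, u i 0 = z0 i)
  (Huu : forall i, req (u i) (u' i)).

Definition cut (w : 'I_N -> R -> R) (n : nat) (t : R) : vec N :=
  fun i => if (i < n)%N then w i t else z0 i.

Lemma Hu'0 i : u' i 0 = z0 i.
Proof. by rewrite -(req_at0 (Huu i)). Qed.

Lemma cut_S w n (hn : (n < N)%N) t : cut w n.+1 t = upd (cut w n t) (Ordinal hn) (w (Ordinal hn) t).
Proof.
apply: functional_extensionality => i; rewrite /cut /upd.
case: eqP => [->|ne] /=; first by rewrite ltnSn.
rewrite ltnS leq_eqVlt.
have -> : (nat_of_ord i == n) = false.
  apply/negbTE/eqP => e; apply: ne; exact: val_inj.
done.
Qed.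

Lemma cut_j w n (hn : (n < N)%N) t : cut w n t (Ordinal hn) = z0 (Ordinal hn).
Proof. by rewrite /cut /= ltnn. Qed.

Lemma core_step n (hn : (n < N)%N) :
  (forall l, Ro (fun t => D l (cut u n t)) /\ req (fun t => D l (cut u n t)) (fun t => D l (cut u' n t))) ->
  (forall l, Ro (fun t => D l (cut u n.+1 t)) /\ req (fun t => D l (cut u n.+1 t)) (fun t => D l (cut u' n.+1 t))).
Proof.
move=> IH l.
set j := Ordinal hn.
have [K0 [C0 [hK0 [hC0 H0]]]] := Ro_holdK (Hu j).
have [K1 [C1 [hK1 [hC1 H1]]]] := Ro_holdK (Hu' j).
rewrite Hu0 in H0. rewrite Hu'0 in H1.
pose K := Nat.mul (Nat.mul K0 2) K1.
have hK0K : (Nat.mul K0 2 <= K)%coq_nat.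
  rewrite /K; move/leP: hK1 => h; nia.
have hK1K : (Nat.mul K1 2 <= K)%coq_nat.
  rewrite /K; move/leP: hK0 => h; nia.
have [e [he He]] := HU Hz0.
have [d1 [hd1 Hd1]] := HC (iter K (cons j) l) Hz0 Rlt_0_1.
set M := Rabs (D (iter K (cons j) l) z0) + 1.
set rho := Rmin (Rmin e d1) 1.
have hrho : 0 < rho by apply: Rmin_pos; [apply: Rmin_pos|]; lra.
have rho_e : rho <= e by apply: Rle_trans (Rmin_l _ _) (Rmin_l _ _).
have rho_d : rho <= d1 by apply: Rle_trans (Rmin_l _ _) (Rmin_r _ _).
have rho_1 : rho <= 1 by apply: Rmin_r.
have Tay : forall w : 'I_N -> R -> R, (forall i, w i 0 = z0 i) -> forall t,
   (forall i, Rabs (w i t - z0 i) < rho) ->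
   Rabs (D l (cut w n.+1 t) - tay (fun k => D (iter k (cons j) l) (cut w n t)) K (w j t - z0 j))
     <= M * Rabs (w j t - z0 j) ^ K.
  move=> w Hw0 t Hwt.
  set wv := cut w n t.
  have wv_box : forall s, Rabs (s - z0 j) < rho -> forall i, Rabs (upd wv j s i - z0 i) < rho.
    move=> s hs i; rewrite /upd; case: eqP => [->//|_].
    rewrite /wv /cut; case: (i < n)%N; first exact: Hwt.
    rewrite Rminus_diag Rabs_R0 //.
  have wv_U : forall s, Rabs (s - z0 j) < rho -> U (upd wv j s).
    move=> s hs; apply: He => i; apply: Rlt_le_trans (wv_box s hs i) rho_e.
  pose G := fun k s => D (iter k (cons j) l) (upd wv j s).
  have HdG : forall k s, Rabs (s - z0 j) < rho -> derivable_pt_lim (G k) s (G (S k) s).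
    move=> k s hs. have := HD (iter k (cons j) l) j (wv_U s hs).
    rewrite /has_partial upd_same. apply: dpl_ext => // y; by rewrite /G upd_upd.
  have HMG : forall s, Rabs (s - z0 j) < rho -> Rabs (G K s) <= M.
    move=> s hs; rewrite /G.
    have := Hd1 _ (wv_U s hs) (fun i => Rlt_le_trans _ _ _ (wv_box s hs i) rho_d).
    have := Rabs_triang_inv (D (iter K (cons j) l) (upd wv j s)) (D (iter K (cons j) l) z0).
    rewrite /M; lra.
  have := @taylor K G (z0 j) rho M HdG HMG (w j t) (Hwt j).
  rewrite /G /= cut_S /wv.
  have -> : (fun k => D (iter k (cons j) l) (upd (cut w n t) j (z0 j))) = (fun k => D (iter k (cons j) l) (cut w n t)).
    by apply: functional_extensionality => k; rewrite -(cut_j w hn t) upd_id.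
  done.
have Rem_lo : forall (w : 'I_N -> R -> R) Kw Cw, (forall i, w i 0 = z0 i) -> (forall i, Ro (w i)) ->
   ev (fun t => Rabs (w j t - z0 j) ^ Kw <= Cw * t) -> (Nat.mul Kw 2 <= K)%coq_nat ->
   little_o (fun t => D l (cut w n.+1 t) - tay (fun k => D (iter k (cons j) l) (cut w n t)) K (w j t - z0 j)).
  move=> w Kw Cw Hw0 Hw Hh hKw.
  have Hb : ev (fun t => forall i, Rabs (w i t - z0 i) < rho).
    apply: ev_fin => i; have := Ro_cont (Hw i) hrho. by rewrite Hw0.
  apply: lo_sq; exists (M * (Cw * Cw)).
  apply: (ev_mono _ (ev_and Hb Hh)) => t t0 [hb hh].
  apply: Rle_trans (Tay w Hw0 t hb) _.
  have hM : 0 <= M by rewrite /M; have := Rabs_pos (D (iter K (cons j) l) z0); lra.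
  set a := Rabs (w j t - z0 j).
  have ha : 0 <= a <= 1 by split; [exact: Rabs_pos | have := hb j; rewrite -/a; lra].
  have h1 : a ^ K <= a ^ (Nat.mul Kw 2) by apply: pow_anti => //; apply/leP.
  rewrite pow_mult in h1.
  have h2 : (a ^ Kw) ^ 2 <= (Cw * t) ^ 2 by apply: pow_incr; split => //; apply: pow_le; lra.
  have h3 : a ^ K <= Cw * Cw * (t * t) by rewrite /= in h2; lra.
  apply: Rle_trans (Rmult_le_compat_l _ _ _ hM h3) _; lra.
have Rov : forall w : 'I_N -> R -> R, Ro (w j) -> Ro (fun t => w j t - z0 j).
  move=> w Hw; apply: (Ro_ext (x := fun t => w j t + (-1) * z0 j)); last by apply: ev_true => t; ring.
  apply: Ro_add => //; exact: Ro_const.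
have Hlo := Rem_lo u K0 C0 Hu0 Hu H0 hK0K.
have Hlo' := Rem_lo u' K1 C1 Hu'0 Hu' H1 hK1K.
have RoT : Ro (fun t => tay (fun k => D (iter k (cons j) l) (cut u n t)) K (u j t - z0 j)).
  apply: (Ro_tay (c := fun k t => D (iter k (cons j) l) (cut u n t))) => [k|]; first exact: (proj1 (IH _)).
  exact: Rov.
split.
  apply: (Ro_lo RoT); exact: Hlo.
have ReqT : req (fun t => tay (fun k => D (iter k (cons j) l) (cut u n t)) K (u j t - z0 j))
                (fun t => tay (fun k => D (iter k (cons j) l) (cut u' n t)) K (u' j t - z0 j)).
  apply: (req_tay (c := fun k t => D (iter k (cons j) l) (cut u n t)) (c' := fun k t => D (iter k (cons j) l) (cut u' n t))).
  - move=> k; exact: (proj2 (IH _)).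
  - move=> k; exact: (proj1 (IH _)).
  - move=> k; apply: (Ro_lo (proj1 (IH (iter k (cons j) l)))).
    have := lo_scal (-1) (proj2 (IH (iter k (cons j) l))). apply: lo_ext => t; ring.
  - apply: lo_ext (Huu j) => t; ring.
  - exact: Rov.
  - exact: Rov.
have := lo_add (lo_add ReqT Hlo) (lo_scal (-1) Hlo').
apply: lo_ext => t; ring.
Qed.

Lemma cut_full w t : cut w N t = fun i => w i t.
Proof. apply: functional_extensionality => i; by rewrite /cut ltn_ord. Qed.

Lemma core : forall l, Ro (fun t => D l (fun i => u i t)) /\
   req (fun t => D l (fun i => u i t)) (fun t => D l (fun i => u' i t)).
Proof.
suff : forall n, (n <= N)%N -> forall l, Ro (fun t => D l (cut u n t)) /\ req (fun t => D l (cut u n t)) (fun t => D l (cut u' n t)).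
  move=> /(_ N (leqnn N)) H l. have := H l.
  have -> : (fun t => D l (cut u N t)) = (fun t => D l (fun i => u i t)).
    by apply: functional_extensionality => t; rewrite cut_full.
  have -> : (fun t => D l (cut u' N t)) = (fun t => D l (fun i => u' i t)).
    by apply: functional_extensionality => t; rewrite cut_full.
  done.
elim=> [|n IHn] hn l.
  have e : forall w t, cut w 0 t = z0 by move=> w t; apply: functional_extensionality => i.
  split.
    apply: (Ro_ext (Ro_const (D l z0))); apply: ev_true => t; by rewrite e.
  apply: lo_ext lo0 => t; rewrite !e; ring.
apply: core_step => //; exact: IHn (ltnW hn).
Qed.
End Core.

Lemma repr_spec (X : FR) : proj1_sig X = (fun y => Ro y /\ req y (repr X)).
Proof. rewrite /repr; case: constructive_indefinite_description => x [Hx E] //. Qed.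

Lemma rep_repr X : rep X (repr X).
Proof. split; first exact: repr_Ro. rewrite repr_spec; split; [exact: repr_Ro | exact: req_refl]. Qed.

Lemma rep_req X x : rep X x -> req x (repr X).
Proof. move=> [_]; rewrite repr_spec; by case. Qed.

Lemma rep_std X x : rep X x -> x 0 = std X.
Proof. move/rep_req/req_at0; by rewrite /std. Qed.

Lemma mkFR_rep x (H : Ro x) y : Ro y -> req y x -> rep (mkFR H) y.
Proof. by move=> Hy Hyx; split => //; split. Qed.

Lemma std_mkFR x (H : Ro x) : std (mkFR H) = x 0.
Proof. symmetry; apply: rep_std; apply: mkFR_rep; [exact: H | exact: req_refl]. Qed.

Lemma FRle_std X Y : FRle X Y -> std X <= std Y.
Proof.
move=> [x [y [z [Hx [Hy [Hz [Hz0 [d [hd Hd]]]]]]]]].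
have := Hd 0 (Rle_refl 0) hd.
rewrite (rep_std Hx) (rep_std Hy) (req_at0 Hz0); lra.
Qed.

Lemma FRle_refl X : FRle X X.
Proof.
exists (repr X), (repr X), (fun _ => 0); split; first exact: rep_repr.
split; first exact: rep_repr. split; first exact: Ro_const. split; first exact: req_refl.
exists 1; split; [lra| move=> t _ _; lra].
Qed.

Lemma std_FRlt X Y : std X < std Y -> FRle X Y /\ X <> Y.
Proof.
move=> h; split; last by move=> e; rewrite e in h; lra.
exists (repr X), (repr Y), (fun _ => 0); split; first exact: rep_repr.
split; first exact: rep_repr. split; first exact: Ro_const. split; first exact: req_refl.
have e := (std Y - std X) / 2.
have h1 : ev (fun t => Rabs (repr X t - repr X 0) < (std Y - std X) / 2) by apply: Ro_cont; [exact: repr_Ro|lra].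
have h2 : ev (fun t => Rabs (repr Y t - repr Y 0) < (std Y - std X) / 2) by apply: Ro_cont; [exact: repr_Ro|lra].
apply: (ev_mono _ (ev_and h1 h2)) => t _ [a b].
rewrite /std in h a b. move: a b; rewrite /Rabs; repeat case: Rcase_abs => ?; lra.
Qed.

Lemma not_lo_sqrt : ~ little_o (fun t => rpow t (/2)).
Proof.
move=> H; have [d [hd Hd]] := H 1 ltac:(lra).
set t := Rmin (d/2) (1/4).
have ht : 0 < t by apply: Rmin_pos; lra.
have ht1 : t < 1 by have := Rmin_r (d/2) (1/4); rewrite -/t; lra.
have htd : t < d by have := Rmin_l (d/2) (1/4); rewrite -/t; lra.
have := Hd t (Rlt_le _ _ ht) htd.
rewrite rpow_pos_t // Rpower_sqrt // Rabs_right; last by apply: Rle_ge; exact: sqrt_pos.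
have hs := sqrt_sqrt t (Rlt_le _ _ ht).
have hsp := sqrt_lt_R0 t ht.
nra.
Qed.

Definition lowC (a : FRbar) (s : R) : Prop :=
  match a with Fin A => std A < s | MInf => True | PInf => False end.
Definition upC (b : FRbar) (s : R) : Prop :=
  match b with Fin B => s < std B | PInf => True | MInf => False end.

Lemma Fin_lt X Y : std X < std Y -> FRbar_lt (Fin X) (Fin Y).
Proof. move/std_FRlt => [h1 h2]; split => //= e; apply: h2; congruence. Qed.

Lemma lowOK a y : lowC a (std y) -> FRbar_lt a (Fin y).
Proof. case: a => [A||] /=; [exact: Fin_lt | by [] | by split]. Qed.

Lemma upOK b y : upC b (std y) -> FRbar_lt (Fin y) b.
Proof. case: b => [B||] /=; [exact: Fin_lt | by split | by []]. Qed.

Lemma inJ_lt k a b y : FRbar_lt a (Fin y) -> FRbar_lt (Fin y) b -> interval k a b y.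
Proof. by case: k => h1 h2 /=; split => //; [case: h1|case: h2|case: h1|case: h2]. Qed.

Lemma inJ k a b y : lowC a (std y) -> upC b (std y) -> interval k a b y.
Proof. move=> h1 h2; apply: inJ_lt; [exact: lowOK|exact: upOK]. Qed.

Lemma std_sub X d : std (FRsub_real X d) = std X - d.
Proof. by rewrite /FRsub_real std_mkFR. Qed.

Lemma ext_low a b d y A : interval OO (FRbar_sub_real a d) (FRbar_add_real b d) y -> a = Fin A ->
  std A - d <= std y.
Proof. move=> [[h1 _] _] e; subst a; rewrite -std_sub; exact: FRle_std. Qed.

Lemma ext_up a b d y B : interval OO (FRbar_sub_real a d) (FRbar_add_real b d) y -> b = Fin B ->
  std y <= std B + d.
Proof.
move=> [_ [h1 _]] e; subst b.
have := FRle_std h1; rewrite /FRbar_add_real /= std_sub; lra.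
Qed.

Lemma PS_sqrt c : PS (fun t => c * rpow t (/2)).
Proof.
apply: (PS_ext (g := fun t => 0 + c * rpow t (/2))); first by move=> t; ring.
apply: PSc; [lra|exact: PS0].
Qed.

Lemma exists_xa A b : upC b (std A) ->
  exists XA, std XA = std A /\ FRbar_lt (Fin A) (Fin XA) /\ FRbar_lt (Fin XA) b.
Proof.
move=> hb.
have H : Ro (fun t => repr A t + 1 * rpow t (/2)) by apply: Ro_add; [exact: repr_Ro| exact: PS_Ro (PS_sqrt 1)].
have hs : std (mkFR H) = std A by rewrite std_mkFR rpow_0a; [rewrite /std; ring|lra].
exists (mkFR H); split => //; split; last by apply: upOK; rewrite hs.
split.
  exists (repr A), (fun t => repr A t + 1 * rpow t (/2)), (fun _ => 0).
  split; first exact: rep_repr. split; first by apply: mkFR_rep; [exact: H | exact: req_refl].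
  split; first exact: Ro_const. split; first exact: req_refl.
  exists 1; split; first lra. move=> t _ _; have := rpow_ge0 t (/2); lra.
move=> [e]. have : rep A (fun t => repr A t + 1 * rpow t (/2)).
  rewrite {1}e; apply: mkFR_rep; [exact: H | exact: req_refl].
move/rep_req => h; apply: not_lo_sqrt; apply: lo_ext h => t; ring.
Qed.

Lemma exists_xb B a : lowC a (std B) ->
  exists XB, std XB = std B /\ FRbar_lt (Fin XB) (Fin B) /\ FRbar_lt a (Fin XB).
Proof.
move=> ha.
have H : Ro (fun t => repr B t + (-1) * rpow t (/2)) by apply: Ro_add; [exact: repr_Ro| exact: PS_Ro (PS_sqrt (-1))].
have hs : std (mkFR H) = std B by rewrite std_mkFR rpow_0a; [rewrite /std; ring|lra].
exists (mkFR H); split => //; split; last by apply: lowOK; rewrite hs.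
split.
  exists (fun t => repr B t + (-1) * rpow t (/2)), (repr B), (fun _ => 0).
  split; first by apply: mkFR_rep; [exact: H | exact: req_refl]. split; first exact: rep_repr.
  split; first exact: Ro_const. split; first exact: req_refl.
  exists 1; split; first lra. move=> t _ _; have := rpow_ge0 t (/2); lra.
move=> [e]. have : rep B (fun t => repr B t + (-1) * rpow t (/2)).
  rewrite -{1}e; apply: mkFR_rep; [exact: H | exact: req_refl].
move/rep_req => h; apply: not_lo_sqrt; have := lo_scal (-1) h; apply: lo_ext => t; ring.
Qed.

Definition joinv p (q : 'I_p -> R) (y : R) : vec p.+1 :=
  fun j => match unlift ord_max j with Some i => q i | None => y end.

Lemma joinv_widen p (q : 'I_p -> R) y i : joinv q y (widen_ord (leqnSn p) i) = q i.
Proof.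
have -> : widen_ord (leqnSn p) i = lift ord_max i by apply: ord_inj; rewrite lift_max.
by rewrite /joinv liftK.
Qed.

Lemma joinv_max p (q : 'I_p -> R) y : joinv q y ord_max = y.
Proof. by rewrite /joinv unlift_none. Qed.

Definition compf p (al : vec p -> R -> R) (qs : 'I_p -> R -> R) (ys : R -> R) : R -> R :=
  fun t => al (fun i => qs i t) (ys t).

Lemma req_ev f g f' g' : req f g -> ev (fun t => f t = f' t) -> ev (fun t => g t = g' t) -> req f' g'.
Proof.
move=> H e1 e2; apply: lo_ev H; apply: (ev_mono _ (ev_and e1 e2)) => t _ [-> ->] //.
Qed.

Lemma comp_ok p (P : vec p -> Prop) V al (q : 'I_p -> FR) y qs ys :
  open_R V -> open_vec P -> P (fun i => std (q i)) -> V (std y) -> smooth_prod P V al ->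
  (forall i, rep (q i) (qs i)) -> rep y ys ->
  Ro (compf al qs ys) /\ req (compf al qs ys) (compf al (fun i => repr (q i)) (repr y)).
Proof.
move=> HV HP Pq Vy [D [HD0 [HDp HDc]]] Hq Hy.
set U := fun z : vec p.+1 => P (fun i => z (widen_ord (leqnSn p) i)) /\ V (z ord_max).
have HU : open_vec U.
  move=> z [hz1 hz2].
  have [e1 [he1 He1]] := HP _ hz1. have [e2 [he2 He2]] := HV _ hz2.
  exists (Rmin e1 e2); split; first by apply: Rmin_pos.
  move=> w hw; split.
    apply: He1 => i; apply: Rlt_le_trans (hw _) (Rmin_l _ _).
  apply: He2; apply: Rlt_le_trans (hw _) (Rmin_r _ _).
set z0 := joinv (fun i => std (q i)) (std y).
have Hz0 : U z0.
  split; last by rewrite /z0 joinv_max.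
  have -> : (fun i => z0 (widen_ord (leqnSn p) i)) = (fun i => std (q i)).
    by apply: functional_extensionality => i; rewrite /z0 joinv_widen.
  done.
set u := fun j t => joinv (fun i => qs i t) (ys t) j.
set u' := fun j t => joinv (fun i => repr (q i) t) (repr y t) j.
have Hu : forall j, Ro (u j).
  move=> j; rewrite /u /joinv; case: (unlift ord_max j) => [i|]; [exact: (proj1 (Hq i)) | exact: (proj1 Hy)].
have Hu' : forall j, Ro (u' j).
  move=> j; rewrite /u' /joinv; case: (unlift ord_max j) => [i|]; exact: repr_Ro.
have Hu0 : forall j, u j 0 = z0 j.
  move=> j; rewrite /u /z0 /joinv; case: (unlift ord_max j) => [i|]; exact: rep_std.
have Huu : forall j, req (u j) (u' j).
  move=> j; rewrite /u /u' /joinv; case: (unlift ord_max j) => [i|]; exact: rep_req.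
have [C1 C2] := core HU Hz0 HDp HDc Hu Hu' Hu0 Huu nil.
have [e [he He]] := HU _ Hz0.
have HinU : forall w : 'I_p.+1 -> R -> R, (forall j, Ro (w j)) -> (forall j, w j 0 = z0 j) ->
    ev (fun t => U (fun j => w j t)).
  move=> w Hw Hw0.
  have : ev (fun t => forall j, Rabs (w j t - z0 j) < e).
    apply: ev_fin => j; have := Ro_cont (Hw j) he; by rewrite Hw0.
  apply: ev_mono => t _ h; exact: He.
have Eu : ev (fun t => D nil (fun j => u j t) = compf al qs ys t).
  apply: (ev_mono _ (HinU u Hu Hu0)) => t _ hU.
  rewrite HD0 // /compf /u joinv_max.
  have -> : (fun i => joinv (fun i0 => qs i0 t) (ys t) (widen_ord (leqnSn p) i)) = (fun i => qs i t).
    by apply: functional_extensionality => i; rewrite joinv_widen.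
  done.
have Hu'0 : forall j, u' j 0 = z0 j by move=> j; rewrite -(req_at0 (Huu j)).
have Eu' : ev (fun t => D nil (fun j => u' j t) = compf al (fun i => repr (q i)) (repr y) t).
  apply: (ev_mono _ (HinU u' Hu' Hu'0)) => t _ hU.
  rewrite HD0 // /compf /u' joinv_max.
  have -> : (fun i => joinv (fun i0 => repr (q i0) t) (repr y t) (widen_ord (leqnSn p) i)) = (fun i => repr (q i) t).
    by apply: functional_extensionality => i; rewrite joinv_widen.
  done.
split; first exact: Ro_ext C1 Eu.
exact: req_ev C2 Eu Eu'.
Qed.

Definition Cf p (q : 'I_p -> FR) (al : vec p -> R -> R) (y : FR) : FR :=
  match excluded_middle_informative (Ro (compf al (fun i => repr (q i)) (repr y))) with
  | left H => mkFR H
  | right _ => y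
  end.

Lemma C_ext p (P : vec p -> Prop) V al (q : 'I_p -> FR) y :
  open_R V -> open_vec P -> P (fun i => std (q i)) -> V (std y) -> smooth_prod P V al ->
  ext_eq al q y (Cf q al y).
Proof.
move=> HV HP Pq Vy Hs qs ys Hq Hy.
have [R1 Q1] := comp_ok HV HP Pq Vy Hs Hq Hy.
have [R0 _] := comp_ok HV HP Pq Vy Hs (fun i => rep_repr (q i)) (rep_repr y).
rewrite /Cf; case: excluded_middle_informative => [H|//].
exact: mkFR_rep R1 Q1.
Qed.

Lemma smooth_prod_mono p (P : vec p -> Prop) V V' al :
  (forall t, V' t -> V t) -> smooth_prod P V al -> smooth_prod P V' al.
Proof.
move=> HVV [D [H0 [H1 H2]]]; exists D; split.
  move=> z [hz1 hz2]; apply: H0; split => //; exact: HVV.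
split.
  move=> l i z [hz1 hz2]; apply: H1; split => //; exact: HVV.
move=> l z [hz1 hz2] eps he.
have [d [hd Hd]] := H2 l z (conj hz1 (HVV _ hz2)) eps he.
exists d; split => // w [hw1 hw2] hw; apply: Hd => //; split => //; exact: HVV.
Qed.

Lemma open_and V1 V2 : open_R V1 -> open_R V2 -> open_R (fun s => V1 s /\ V2 s).
Proof.
move=> H1 H2 r [h1 h2].
have [e1 [he1 He1]] := H1 r h1. have [e2 [he2 He2]] := H2 r h2.
exists (Rmin e1 e2); split; first by apply: Rmin_pos.
move=> s hs; split; [apply: He1|apply: He2]; [apply: Rlt_le_trans hs (Rmin_l _ _)|apply: Rlt_le_trans hs (Rmin_r _ _)].
Qed.

Lemma open_gtl l : open_R (fun s => l < s).
Proof.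
move=> r h; exists (r - l); split; first lra.
move=> s; rewrite /Rabs; case: Rcase_abs => ? ?; lra.
Qed.

Lemma open_ltr u : open_R (fun s => s < u).
Proof.
move=> r h; exists (u - r); split; first lra.
move=> s; rewrite /Rabs; case: Rcase_abs => ? ?; lra.
Qed.

Lemma open_True : open_R (fun _ => True).
Proof. move=> r _; exists 1; split => //; lra. Qed.

Lemma open_False : open_R (fun _ => False).
Proof. by move=> r. Qed.

Lemma open_int l u : open_R (fun s => l < s < u).
Proof. have := open_and (@open_gtl l) (@open_ltr u). done. Qed.

Lemma open_lowC a : open_R (lowC a).
Proof. case: a => [A||] /=; [exact: open_gtl | exact: open_False | exact: open_True]. Qed.

Lemma open_upC b : open_R (upC b).
Proof. case: b => [B||] /=; [exact: open_ltr | exact: open_True | exact: open_False]. Qed.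

Definition ZAf (a : FRbar) (ea : R) (s : R) : Prop :=
  match a with Fin A => std A - ea < s < std A + ea | _ => False end.

Lemma open_ZAf a ea : open_R (ZAf a ea).
Proof. case: a => [A||] /=; [exact: open_int | exact: open_False | exact: open_False]. Qed.

Definition FR0 : FR := mkFR (Ro_const 0).

Lemma smooth_prod_empty p (P : vec p -> Prop) al : smooth_prod P (fun _ => False) al.
Proof.
exists (fun _ _ => 0); split; first by move=> z [_ []].
split; first by move=> l i z [_ []].
by move=> l z [_ []].
Qed.

Lemma upC_of A b : std_lt (Fin A) b -> upC b (std A).
Proof. by case: b. Qed.
Lemma lowC_of B a : std_lt a (Fin B) -> lowC a (std B).
Proof. by case: a. Qed.

Lemma dummy_data (Z : R -> Prop) (J : FR -> Prop) (f : FR -> FR) : (forall s, ~ Z s) ->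
  exists p (P : vec p -> Prop) q al, open_vec P /\ P (fun i => std (q i)) /\ smooth_prod P Z al /\
    forall y, Z (std y) -> J y -> ext_eq al q y (f y).
Proof.
move=> HZ; exists 0%N, (fun _ => True), (fun _ => FR0), (fun _ _ => 0); split.
  by move=> z _; exists 1; split => //; lra.
split => //; split; last by move=> y /HZ.
exists (fun _ _ => 0); split; first by move=> z [_ /HZ].
split; first by move=> l i z [_ /HZ].
by move=> l z [_ /HZ].
Qed.

Lemma A_data k a b f g : std_lt a b -> smooth_on (interval k a b) f -> 0 < g ->
  exists ea, 0 < ea /\ ea <= g /\ exists p (P : vec p -> Prop) q al,
    open_vec P /\ P (fun i => std (q i)) /\ smooth_prod P (ZAf a ea) al /\
    forall y, ZAf a ea (std y) -> interval k a b y -> ext_eq al q y (f y).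
Proof.
move=> hstd Hf hg.
case: a hstd Hf => [A||] hstd Hf; try by exists g; split; [exact: hg| split; [lra | apply: dummy_data => s []]].
have hup : upC b (std A) by move: hstd; apply: upC_of.
have [XA [hsX [h1 h2]]] := exists_xa hup.
have hJ : interval k (Fin A) b XA by apply: inJ_lt.
have [V [p [P [q [al [HV [VX [HP [Pq [Hs Hc]]]]]]]]]] := Hf XA hJ.
have [e0 [he0 He0]] := HV _ VX.
exists (Rmin e0 g); split; first by apply: Rmin_pos.
split; first exact: Rmin_r.
have sub : forall s, ZAf (Fin A) (Rmin e0 g) s -> V s.
  move=> s /= hs; apply: He0; rewrite hsX.
  have := Rmin_l e0 g. move: hs; rewrite /Rabs; case: Rcase_abs => ? ?; lra.
exists p, P, q, al; split => //; split => //; split.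
  exact: smooth_prod_mono sub Hs.
move=> y hy hyJ; apply: Hc => //; exact: sub.
Qed.

Lemma B_data k a b f g : std_lt a b -> smooth_on (interval k a b) f -> 0 < g ->
  exists eb, 0 < eb /\ eb <= g /\ exists p (P : vec p -> Prop) q al,
    open_vec P /\ P (fun i => std (q i)) /\ smooth_prod P (ZAf b eb) al /\
    forall y, ZAf b eb (std y) -> interval k a b y -> ext_eq al q y (f y).
Proof.
move=> hstd Hf hg.
case: b hstd Hf => [B||] hstd Hf; try by exists g; split; [exact: hg| split; [lra | apply: dummy_data => s []]].
have hlo : lowC a (std B) by move: hstd; apply: lowC_of.
have [XB [hsX [h1 h2]]] := exists_xb hlo.
have hJ : interval k a (Fin B) XB by apply: inJ_lt.
have [V [p [P [q [al [HV [VX [HP [Pq [Hs Hc]]]]]]]]]] := Hf XB hJ.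
have [e0 [he0 He0]] := HV _ VX.
exists (Rmin e0 g); split; first by apply: Rmin_pos.
split; first exact: Rmin_r.
have sub : forall s, ZAf (Fin B) (Rmin e0 g) s -> V s.
  move=> s /= hs; apply: He0; rewrite hsX.
  have := Rmin_l e0 g. move: hs; rewrite /Rabs; case: Rcase_abs => ? ?; lra.
exists p, P, q, al; split => //; split => //; split.
  exact: smooth_prod_mono sub Hs.
move=> y hy hyJ; apply: Hc => //; exact: sub.
Qed.

Definition gf (a b : FRbar) : R :=
  match a, b with Fin A, Fin B => (std B - std A) / 3 | _, _ => 1 end.

Lemma gf_pos a b : std_lt a b -> 0 < gf a b.
Proof. case: a => [A||]; case: b => [B||] //= h; lra. Qed.

Lemma disjZ a b ea eb s : std_lt a b -> ea <= gf a b -> eb <= gf a b ->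
  ZAf a ea s -> ZAf b eb s -> False.
Proof. case: a => [A||]; case: b => [B||] //= h1 h2 h3 h4 h5; lra. Qed.

Lemma std_lt_PInf b : std_lt PInf b -> False.
Proof. by case: b. Qed.
Lemma std_lt_MInf a : std_lt a MInf -> False.
Proof. by case: a. Qed.

Lemma midC a b ea eb d y : std_lt a b -> 0 < d -> d < ea -> d < eb ->
  interval OO (FRbar_sub_real a d) (FRbar_add_real b d) y ->
  ~ ZAf a ea (std y) -> ~ ZAf b eb (std y) -> lowC a (std y) /\ upC b (std y).
Proof.
move=> hstd hd hda hdb Hy hA hB; split.
  move: hstd Hy hA; case: a => [A||] hstd Hy hA.
  - have h := ext_low Hy (erefl _). rewrite /= in hA |- *.
    case: (Rlt_le_dec (std A) (std y)) => // h'; exfalso; apply: hA; lra.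
  - exfalso; exact: std_lt_PInf hstd.
  - done.
move: hstd Hy hB; case: b => [B||] hstd Hy hB.
- have h := ext_up Hy (erefl _). rewrite /= in hB |- *.
  case: (Rlt_le_dec (std y) (std B)) => // h'; exfalso; apply: hB; lra.
- done.
- exfalso; exact: std_lt_MInf hstd.
Qed.

Unset Implicit Arguments.
Set Strict Implicit.

Theorem lemma8 (a b : FRbar) (J : FR -> Prop) (f : FR -> FR) :
  noninf_interval J a b ->
  smooth_on J f ->
  exists (delta : R) (fbar : FR -> FR),
    0 < delta /\
    smooth_on (interval OO (FRbar_sub_real a delta) (FRbar_add_real b delta)) fbar /\
    (forall x, J x -> fbar x = f x).
Proof.
move=> [hab [hstd [k ->]]] Hf.
have hg := gf_pos hstd.
have [ea [hea [heag [pA [PA [qA [alA [HPA [PqA [HsA HcA]]]]]]]]]] := A_data hstd Hf hg.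
have [eb [heb [hebg [pB [PB [qB [alB [HPB [PqB [HsB HcB]]]]]]]]]] := B_data hstd Hf hg.
set delta := Rmin ea eb / 2.
have hdp : 0 < delta by rewrite /delta; have := Rmin_pos _ _ hea heb; lra.
have hda : delta < ea by rewrite /delta; have := Rmin_l ea eb; have := Rmin_pos _ _ hea heb; lra.
have hdb : delta < eb by rewrite /delta; have := Rmin_r ea eb; have := Rmin_pos _ _ hea heb; lra.
set fbar := fun y =>
  match excluded_middle_informative (interval k a b y) with
  | left _ => f y
  | right _ => match excluded_middle_informative (ZAf a ea (std y)) with
               | left _ => Cf qA alA y
               | right _ => Cf qB alB y
               end
  end.
exists delta, fbar; split => //; split; last first.
  by move=> x hx; rewrite /fbar; case: excluded_middle_informative.
move=> x Hx.
case: (excluded_middle_informative (ZAf a ea (std x))) => hZA.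
  exists (ZAf a ea), pA, PA, qA, alA; split; first exact: open_ZAf.
  split => //; split => //; split => //; split => //.
  move=> y hy hyext; rewrite /fbar.
  case: excluded_middle_informative => hJ; first exact: HcA.
  case: excluded_middle_informative => // _.
  exact: C_ext (@open_ZAf a ea) HPA PqA hy HsA.
case: (excluded_middle_informative (ZAf b eb (std x))) => hZB.
  exists (ZAf b eb), pB, PB, qB, alB; split; first exact: open_ZAf.
  split => //; split => //; split => //; split => //.
  move=> y hy hyext; rewrite /fbar.
  case: excluded_middle_informative => hJ; first exact: HcB.
  case: excluded_middle_informative => hZ.
    exfalso; exact: disjZ hstd heag hebg hZ hy.
  exact: C_ext (@open_ZAf b eb) HPB PqB hy HsB.
have [hl hu] := midC hstd hdp hda hdb Hx hZA hZB.
have hxJ := inJ k hl hu.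
have [V [p [P [q [al [HV [VX [HP [Pq [Hs Hc]]]]]]]]]] := Hf x hxJ.
exists (fun s => V s /\ lowC a s /\ upC b s), p, P, q, al; split.
  exact: open_and HV (open_and (@open_lowC a) (@open_upC b)).
split; first by split.
split => //; split => //; split.
  by apply: smooth_prod_mono Hs => s [].
move=> y [hV [hl' hu']] hyext.
have hyJ := inJ k hl' hu'.
rewrite /fbar; case: excluded_middle_informative => // _.
exact: Hc.
Qed.
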